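(* Let $m\ge 2$, $d\ge1$ be integers, $n=md$, $a,c>0$. Let $G$ be the $n\times n$ matrix with $G_{ij}=\frac{n^2-1-6|i-j|(n-|i-j|)}{12cn}$ and let $s=-a\sum_{k=1}^m e_{1+(k-1)d}\in\mathbb R^n$. Then for all $i=1,\dots,d$ and $k=1,\dots,m$, $$(Gs)_{i+(k-1)d}=\mathsf n_i:=-\frac{a}{12cn}\Bigl(n(6+d)+5m+6mi(i-d-2)\Bigr),$$ i.e. $Gs$ is the vector $(\mathsf n,\mathsf n,\dots,\mathsf n)$ consisting of $m$ copies of $\mathsf n=(\mathsf n_1,\dots,\mathsf n_d)$. Moreover, with $\Pi$ the $n\times\binom m2$ matrix whose columns are $\sqrt{a/m}\,(e_{1+(i-1)d}-e_{1+(j-1)d})$, $1\le i<j\le m$, and $M=G-G\Pi(I+\Pi^\top G\Pi)^{-1}\Pi^\top G$, one has $Ms=Gs$.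
   Context: $e_j$ is the $j$-th standard basis vector of $\mathbb R^n$; $I$ is the identity of size $\binom m2$. ($G$ is the group inverse of the Laplacian of the $n$-cycle with all conductances $c$.) *)

(* Defs.v *)
From HB Require Import structures.
From mathcomp Require Import all_boot all_order all_algebra.
Set Implicit Arguments. Unset Strict Implicit. Unset Printing Implicit Defensive.
Import Order.TTheory GRing.Theory Num.Theory.
Local Open Scope ring_scope.

(* distance |i - j| between two naturals (0-based indices; same as 1-based) *)
Definition distn (i j : nat) : nat := `|(i%:Z - j%:Z)%R|%N.

Definition Gcyc (R : numFieldType) (n : nat) (c : R) : 'M[R]_n :=
  \matrix_(i < n, j < n)
    ((n%:R ^+ 2 - 1 - 6%:R * (distn i j)%:R * (n%:R - (distn i j)%:R))
       / (12%:R * c * n%:R)).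

Definition ebasis (R : numFieldType) (n j : nat) : 'cV[R]_n :=
  \col_(p < n) (if val p == j then 1 else 0).

(* s = - a * sum_{k=1}^m e_{1+(k-1)d}  (0-based: e_{k d}, k < m) *)
Definition svec (R : numFieldType) (m d : nat) (a : R) : 'cV[R]_(m * d) :=
  - a *: \sum_(k < m) ebasis R (m * d) (k * d).

(* index set of pairs 1 <= i < j <= m (0-based), of cardinality 'C(m,2) *)
Definition pairs (m : nat) : {set 'I_m * 'I_m} := [set ij : 'I_m * 'I_m | (val ij.1 < val ij.2)%N].

Definition Pimx (R : rcfType) (m d : nat) (a : R) : 'M[R]_(m * d, #|pairs m|) :=
  \matrix_(p < m * d, q < #|pairs m|)
    (Num.sqrt (a / m%:R) *
      (ebasis R (m * d) ((enum_val q).1 * d) p 0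
       - ebasis R (m * d) ((enum_val q).2 * d) p 0)).

Definition Mmx (R : rcfType) (m d : nat) (a c : R) : 'M[R]_(m * d) :=
  let G := Gcyc (m * d) c in
  let P := Pimx m d a in
  G - G *m P *m invmx (1%:M + P^T *m G *m P) *m P^T *m G.

(* n_i for 1-based i *)
Definition nn (R : numFieldType) (m d : nat) (a c : R) (i : nat) : R :=
  let n := (m * d)%N in
  - (a / (12%:R * c * n%:R)) *
    (n%:R * (6%:R + d%:R) + 5%:R * m%:R
     + 6%:R * m%:R * i%:R * (i%:R - d%:R - 2%:R)).

(* Main.v *)
Require Import Defs.
From HB Require Import structures.
From mathcomp Require Import all_boot all_order all_algebra.
From mathcomp Require Import zify ring lra.
Import Order.TTheory GRing.Theory Num.Theory.
Local Open Scope ring_scope.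
Set Implicit Arguments. Unset Strict Implicit. Unset Printing Implicit Defensive.

Lemma sum_ebasis (R : numFieldType) n x (F : 'I_n -> R) (hx : (x < n)%N) :
  \sum_p ebasis R n x p 0 * F p = F (Ordinal hx).
Proof.
rewrite (bigD1 (Ordinal hx)) //= big1 ?addr0.
  by rewrite /ebasis mxE eqxx mul1r.
move=> q hq; rewrite /ebasis mxE; case: eqP => [e|_]; last by rewrite mul0r.
by move: hq; rewrite (_ : q = Ordinal hx) ?eqxx //; apply: val_inj.
Qed.

Definition Hf (R : numDomainType) (n : nat) (t : R) : R :=
  n%:R ^+ 2 - 1 - 6%:R * t * (n%:R - t).

Definition Gent (R : numFieldType) (n : nat) (c : R) (u v : nat) : R :=
  Hf n (distn u v)%:R / (12%:R * c * n%:R).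

Lemma Gs_entry (R : numFieldType) m d (a c : R) (p : 'I_(m*d)) :
  (0 < d)%N ->
  (Gcyc (m*d) c *m svec m d a) p 0 = - a * \sum_(k < m) Gent (m*d) c p (k*d).
Proof.
move=> d0; rewrite /svec -scalemxAr mulmx_sumr mxE summxE; congr (_ * _).
apply: eq_bigr => k _.
have hk : (k * d < m * d)%N by rewrite ltn_pmul2r.
rewrite !mxE (eq_bigr (fun j => ebasis R (m*d) (k*d) j 0 * Gcyc (m*d) c p j)).
  by rewrite (sum_ebasis _ hk) /Gcyc mxE.
by move=> j _; rewrite mulrC.
Qed.

Lemma distnR (R : numDomainType) u v : (distn u v)%:R = `|u%:R - v%:R| :> R.
Proof. by rewrite /distn natr_absz intr_norm rmorphB. Qed.


Definition sig (m k0 k : nat) : nat := if (k <= k0)%N then (k0 - k)%N else (k0 + m - k)%N.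

Lemma term (R : numDomainType) m d i k0 k : (i < d)%N -> (k0 < m)%N -> (k < m)%N ->
  Hf (m*d) `|(i + k0*d)%:R - (k*d)%:R| = Hf (m*d) ((i + sig m k0 k * d)%:R : R).
Proof.
move=> hi hk0 hk; rewrite /sig; case: leqP => hkk.
  rewrite ger0_norm; last by rewrite subr_ge0 ler_nat; nia.
  rewrite /Hf !natrD !natrM natrB //; ring.
rewrite ler0_norm; last by rewrite subr_le0 ler_nat; nia.
rewrite /Hf !natrD !natrM natrB; last by lia.
rewrite natrD; ring.
Qed.

Lemma sig_lt m k0 k : (k0 < m)%N -> (k < m)%N -> (sig m k0 k < m)%N.
Proof. move=> h1 h2; rewrite /sig; case: (leqP k k0) => ?; lia. Qed.

Definition sigo m (k0 k : 'I_m) : 'I_m := Ordinal (sig_lt (ltn_ord k0) (ltn_ord k)).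

Lemma sigo_inj m (k0 : 'I_m) : injective (sigo k0).
Proof.
move=> k1 k2 /(congr1 val) /=; rewrite /sig => h; apply: val_inj => /=.
have := ltn_ord k1; have := ltn_ord k2; have := ltn_ord k0.
move: h; case: (leqP k1 k0) => ?; case: (leqP k2 k0) => ?; lia.
Qed.

Lemma sum_reindex (R : numDomainType) m (k0 : 'I_m) (F : nat -> R) :
  \sum_(k < m) F (sig m k0 k) = \sum_(j < m) F j.
Proof. by rewrite [RHS](reindex_inj (@sigo_inj m k0)). Qed.

Lemma sumpoly (R : numFieldType) (A B C : R) m :
  6%:R * \sum_(j < m) (A + B * j%:R + C * j%:R ^+ 2) =
  6%:R * m%:R * A + 3%:R * B * m%:R * (m%:R - 1)
  + C * m%:R * (m%:R - 1) * (2%:R * m%:R - 1).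
Proof.
elim: m => [|m IH]; first by rewrite big_ord0; ring.
rewrite big_ord_recr /= mulrDr IH -natr1; ring.
Qed.

Lemma part1 (R : numFieldType) m d (a c : R) (i : 'I_d) (k0 : 'I_m) (p : 'I_(m*d)) :
  0 < c -> val p = (i + k0 * d)%N ->
  (Gcyc (m*d) c *m svec m d a) p 0 = nn m d a c i.+1.
Proof.
move=> c0 hp.
have d0 : (0 < d)%N by have := ltn_ord i; lia.
have m0 : (0 < m)%N by have := ltn_ord k0; lia.
rewrite Gs_entry //.
set K := 12%:R * c * (m*d)%:R.
have -> : \sum_(k < m) Gent (m*d) c p (k*d) =
          \sum_(k < m) Hf (m*d) ((i + sig m k0 k * d)%:R : R) / K.
  apply: eq_bigr => k _; rewrite /Gent distnR hp term //.
rewrite (sum_reindex k0 (fun j => Hf (m*d) ((i + j * d)%:R : R) / K)) -mulr_suml.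
set A := (m*d)%:R ^+ 2 - 1 - 6%:R * i%:R * ((m*d)%:R - i%:R) : R.
set B := - 6%:R * d%:R * ((m*d)%:R - 2%:R * i%:R) : R.
set C := 6%:R * d%:R ^+ 2 : R.
have -> : \sum_(j < m) Hf (m*d) ((i + j * d)%:R : R) =
          \sum_(j < m) (A + B * j%:R + C * j%:R ^+ 2).
  by apply: eq_bigr => j _; rewrite /Hf /A /B /C !natrD !natrM; ring.
have S6 := sumpoly A B C m.
set S := \sum_(j < m) _ in S6 *.
have -> : S = (6%:R * S) / 6%:R by field.
rewrite S6 /nn /K /A /B /C !natrM -natr1.
have cn : c != 0 by rewrite gt_eqF.
have mn : m%:R != 0 :> R by rewrite pnatr_eq0 -lt0n.
have dn : d%:R != 0 :> R by rewrite pnatr_eq0 -lt0n.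
field.
rewrite ?pnatr_eq0 ?cn ?mn ?dn; lia.
Qed.

Theorem lemma4p7 (R : rcfType) (m d : nat) (a c : R) :
  (2 <= m)%N -> (1 <= d)%N -> 0 < a -> 0 < c ->
  (forall (i : 'I_d) (k : 'I_m) (p : 'I_(m * d)),
      val p = (i + k * d)%N ->
      (Gcyc (m * d) c *m svec m d a) p 0 = nn m d a c i.+1)
  /\ Mmx m d a c *m svec m d a = Gcyc (m * d) c *m svec m d a.
Proof.
move=> m2 d1 a0 c0.
have P1 : forall (i : 'I_d) (k : 'I_m) (p : 'I_(m * d)),
      val p = (i + k * d)%N ->
      (Gcyc (m * d) c *m svec m d a) p 0 = nn m d a c i.+1.
  move=> i k p hp; exact: (part1 a c0 hp).
split => //.
set g := Gcyc (m * d) c *m svec m d a.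
have gk : forall (k : 'I_m) (hk : (k * d < m * d)%N), g (Ordinal hk) 0 = nn m d a c 1.
  move=> k hk; exact: (P1 (Ordinal d1) k).
have PGs : (Pimx m d a)^T *m g = 0.
  apply/matrixP => q j; rewrite !mxE.
  set x1 := ((enum_val q).1 * d)%N; set x2 := ((enum_val q).2 * d)%N.
  have h1 : (x1 < m * d)%N by rewrite ltn_pmul2r.
  have h2 : (x2 < m * d)%N by rewrite ltn_pmul2r.
  rewrite (eq_bigr (fun p => Num.sqrt (a / m%:R) * (ebasis R (m*d) x1 p 0 * g p j)
                - Num.sqrt (a / m%:R) * (ebasis R (m*d) x2 p 0 * g p j))); last first.
    by move=> p _; rewrite !mxE; ring.
  rewrite sumrB -!mulr_sumr !(sum_ebasis _ h1) !(sum_ebasis _ h2) (ord1 j).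
  by rewrite gk gk subrr.
rewrite /Mmx -/g mulmxBl -!mulmxA -/g PGs !mulmx0 subr0.
exact: erefl.
Qed.
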